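(* Let $n\ge 2$, let $\psi\in\mathrm{Aut}(F_n)$, let $\Gamma=F_n/K$ be a finite characteristic quotient of $F_n$, and let $(X,x_1)\to(R_n,* )$ be the associated finite based cover, so that $\pi_1(X,x_1)\cong K$. If the automorphism of $\Gamma$ induced by $\psi$ is not the identity, then the automorphism of $H_1(X,\mathbb{Z})$ induced by $\psi$ is not the identity.
   Context: $F_n$ is the free group of rank $n\ge2$ with a fixed free basis $x_1,\dots,x_n$, identified with $\pi_1(R_n,* )$, where $R_n$ is the wedge of $n$ circles with wedge point $*$. A subgroup $K\le F_n$ is characteristic if $\psi(K)=K$ for all $\psi\in\mathrm{Aut}(F_n)$; then $\Gamma=F_n/K$ is a characteristic quotient and every $\psi\in\mathrm{Aut}(F_n)$ induces an automorphism of $\Gamma$. The based cover associated to a finite-index subgroup $K$ is the connected covering $p:(X,x_1)\to(R_n,* )$ with $p_*\pi_1(X,x_1)=K$; its deck group is $\Gamma$. The action of $\psi$ on $H_1(X,\mathbb{Z})$ is the automorphism of $K^{ab}\cong H_1(X,\mathbb{Z})$ induced by the restriction $\psi|_K:K\to K$ (equivalently, induced by the basepoint-preserving lift to $X$ of a based homotopy equivalence of $R_n$ realizing $\psi$). *)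

(* Defs.v *)
From HB Require Import structures.
From mathcomp Require Import all_boot.
Set Implicit Arguments. Unset Strict Implicit. Unset Printing Implicit Defensive.

Section FreeGroup.
Variable n : nat.

(* a letter (i, false) stands for x_i, (i, true) for x_i^-1 *)
Definition letter := ('I_n * bool)%type.
Definition linv (a : letter) : letter := (a.1, ~~ a.2).

Definition reduced (w : seq letter) : bool :=
  sorted (fun a b => b != linv a) w.

Definition push (a : letter) (w : seq letter) : seq letter :=
  if w is b :: w' then (if b == linv a then w' else a :: w) else [:: a].

Definition freduce (w : seq letter) : seq letter := foldr push [::] w.

Lemma reduced_push a w : reduced w -> reduced (push a w).
Proof.
case: w => [|b w] //= Hw; case: ifP => Hb.
  by case: w Hw => //= c w /andP[].
by rewrite /reduced /= Hb.
Qed.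

Lemma reduced_freduce w : reduced (freduce w).
Proof. by elim: w => //= a w IH; apply: reduced_push. Qed.

Record FG := MkFG { fgword :> seq letter; _ : reduced fgword }.
HB.instance Definition _ := [isSub for fgword].
HB.instance Definition _ := [Equality of FG by <:].

Definition fg_of (w : seq letter) : FG := MkFG (reduced_freduce w).
Definition fg1 : FG := fg_of [::].
Definition fgmul (u v : FG) : FG := fg_of (fgword u ++ fgword v).
Definition fginv (u : FG) : FG := fg_of (rev (map linv (fgword u))).
Definition fggen (i : 'I_n) : FG := fg_of [:: (i, false)].
Definition fgcomm (a b : FG) : FG := fgmul (fgmul (fginv a) (fginv b)) (fgmul a b).

Definition is_aut (psi : FG -> FG) : Prop :=
  (forall u v, psi (fgmul u v) = fgmul (psi u) (psi v)) /\ bijective psi.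

Definition is_subgroup (K : FG -> Prop) : Prop :=
  [/\ K fg1, (forall u v, K u -> K v -> K (fgmul u v)) & (forall u, K u -> K (fginv u))].

Definition finite_index (K : FG -> Prop) : Prop :=
  exists s : seq FG, forall g, exists2 r, r \in s & K (fgmul (fginv r) g).

Definition characteristic (K : FG -> Prop) : Prop :=
  forall phi, is_aut phi -> forall h, K h <-> exists g, K g /\ phi g = h.

Inductive gen_sub (S : FG -> Prop) : FG -> Prop :=
  | gen_one : gen_sub S fg1
  | gen_in u : S u -> gen_sub S u
  | gen_mul u v : gen_sub S u -> gen_sub S v -> gen_sub S (fgmul u v)
  | gen_inv u : gen_sub S u -> gen_sub S (fginv u).

Definition comm_sub (K : FG -> Prop) : FG -> Prop :=
  gen_sub (fun c => exists a b, [/\ K a, K b & c = fgcomm a b]).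

(* psi induces the identity on Gamma = F_n / K:  psi(g) K = g K for all g *)
Definition induced_id_quotient (psi : FG -> FG) (K : FG -> Prop) : Prop :=
  forall g, K (fgmul (fginv g) (psi g)).

(* psi|_K induces the identity on K^ab = K / [K,K] (= H_1(X, Z)):
   psi(k) [K,K] = k [K,K] for all k in K *)
Definition induced_id_abelianization (psi : FG -> FG) (K : FG -> Prop) : Prop :=
  forall k, K k -> comm_sub K (fgmul (fginv k) (psi k)).

End FreeGroup.

(* Main.v *)
Require Import Defs.
From mathcomp Require Import all_boot zify.
From Stdlib Require Import ClassicalEpsilon Classical ZArith Lia.
Set Implicit Arguments. Unset Strict Implicit. Unset Printing Implicit Defensive.


Section FGLaws.
Variable n : nat.
Notation FG := (FG n).
Notation letter := (letter n).
Notation push := (@push n).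
Notation freduce := (@freduce n).
Notation reduced := (@reduced n).
Notation linv := (@linv n).

Lemma linvK (a : letter) : linv (linv a) = a.
Proof. by case: a => i b; rewrite /linv /= negbK. Qed.

Lemma linv_neq (a : letter) : linv a != a.
Proof. by case: a => i b; rewrite /linv /= xpair_eqE eqxx /=; case: b. Qed.

Lemma reduced_tail (a : letter) w : reduced (a :: w) -> reduced w.
Proof. exact: path_sorted. Qed.

Lemma push_red (a : letter) w : reduced (a :: w) -> push a w = a :: w.
Proof. by case: w => [|b w] //= /andP[/negbTE -> _]. Qed.

Lemma freduce_red w : reduced w -> freduce w = w.
Proof.
elim: w => //= a w IH Hw.
by rewrite IH ?(reduced_tail Hw) // push_red.
Qed.

Lemma push_linv (a : letter) w : reduced w -> push (linv a) (push a w) = w.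
Proof.
case: w => [|b w] /=; first by rewrite linvK eqxx.
case: ifP => Hb Hr.
  move/eqP: Hb Hr => ->.
  case: w => [|c w] //= /andP[Hc _].
  by rewrite linvK in Hc *; rewrite (negbTE Hc).
by rewrite /= linvK eqxx.
Qed.

Lemma reduced_foldr w u : reduced w -> reduced (foldr push w u).
Proof. by move=> Hw; elim: u => //= a u IH; apply: reduced_push. Qed.

Lemma foldr_push_push (a : letter) t w : reduced t -> reduced w ->
  foldr push w (push a t) = push a (foldr push w t).
Proof.
case: t => [|b t] //= Ht Hw.
case: ifP => Hb //=.
move/eqP: Hb => ->.
by rewrite -{1}(linvK a) push_linv // reduced_foldr.
Qed.

Lemma foldr_push_freduce u w : reduced w ->
  foldr push w (freduce u) = foldr push w u.
Proof.
move=> Hw; elim: u => //= a u IH.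
by rewrite foldr_push_push ?reduced_freduce // IH.
Qed.

Lemma freduce_cat u v : freduce (u ++ v) = foldr push (freduce v) u.
Proof. by rewrite /freduce foldr_cat. Qed.

Lemma freduce_catl u v : freduce (freduce u ++ v) = freduce (u ++ v).
Proof. by rewrite !freduce_cat foldr_push_freduce // reduced_freduce. Qed.

Lemma freduce_catr u v : freduce (u ++ freduce v) = freduce (u ++ v).
Proof. by rewrite !freduce_cat freduce_red // reduced_freduce. Qed.

Lemma freduce_invl u t : freduce (rev (map linv u) ++ u ++ t) = freduce t.
Proof.
elim: u t => //= a u IH t.
rewrite rev_cons -cats1 -catA /=.
rewrite -freduce_catr.
have -> : freduce (linv a :: a :: u ++ t) = freduce (u ++ t).
  by rewrite /= push_linv // reduced_freduce.
rewrite freduce_catr.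
exact: IH.
Qed.

Lemma revlinvK u : rev (map linv (rev (map linv u))) = u.
Proof. by rewrite map_rev revK -map_comp map_id_in // => a _ /=; rewrite linvK. Qed.

Lemma fgE (u : FG) : fg_of (fgword u) = u.
Proof. apply: val_inj => /=; case: u => w Hw /=; exact: freduce_red. Qed.

Lemma fgword_of (w : seq letter) : fgword (fg_of w) = freduce w.
Proof. by []. Qed.

Lemma fgA (u v w : FG) : fgmul u (fgmul v w) = fgmul (fgmul u v) w.
Proof.
apply: val_inj; rewrite /= freduce_catr freduce_catl catA //.
Qed.

Lemma fg1m (u : FG) : fgmul (fg1 n) u = u.
Proof. by rewrite /fgmul /= fgE. Qed.

Lemma fgm1 (u : FG) : fgmul u (fg1 n) = u.
Proof. by rewrite /fgmul /= cats0 fgE. Qed.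

Lemma fgVm (u : FG) : fgmul (fginv u) u = fg1 n.
Proof.
apply: val_inj; rewrite /= freduce_catl.
by have := freduce_invl (fgword u) [::]; rewrite cats0.
Qed.

Lemma fgmV (u : FG) : fgmul u (fginv u) = fg1 n.
Proof.
apply: val_inj; rewrite /= freduce_catr.
have := freduce_invl (rev (map linv (fgword u))) [::].
by rewrite revlinvK cats0.
Qed.

Lemma fg_cat (u v : seq letter) : fg_of (u ++ v) = fgmul (fg_of u) (fg_of v).
Proof. by apply: val_inj; rewrite /= freduce_catl freduce_catr. Qed.

End FGLaws.


Definition pb (P : Prop) : bool :=
  match excluded_middle_informative P with left _ => true | right _ => false end.
Lemma pbP (P : Prop) : reflect P (pb P).
Proof. rewrite /pb; case: excluded_middle_informative => H; by constructor. Qed.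
Lemma pb_iff (P Q : Prop) : (P <-> Q) -> pb P = pb Q.
Proof. by move=> H; apply/idP/idP => /pbP HH; apply/pbP; apply/H. Qed.

Section Group.
Variable n : nat.
Notation FG := (FG n).
Notation letter := (letter n).
Local Notation "x * y" := (fgmul x y).
Local Notation "x ^-1" := (fginv x).
Local Notation "1" := (fg1 n).

Lemma fgKm (u v : FG) : u^-1 * (u * v) = v.
Proof. by rewrite fgA fgVm fg1m. Qed.
Lemma fgKVm (u v : FG) : u * (u^-1 * v) = v.
Proof. by rewrite fgA fgmV fg1m. Qed.
Lemma fgmK (u v : FG) : (v * u) * u^-1 = v.
Proof. by rewrite -fgA fgmV fgm1. Qed.
Lemma fgmKV (u v : FG) : (v * u^-1) * u = v.
Proof. by rewrite -fgA fgVm fgm1. Qed.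
Lemma inv_uniq (u v : FG) : u * v = 1 -> u^-1 = v.
Proof. by move=> H; rewrite -(fgKm u v) H fgm1. Qed.
Lemma fgVK (u : FG) : (u^-1)^-1 = u.
Proof. by apply: inv_uniq; rewrite fgVm. Qed.
Lemma fgVM (u v : FG) : (u * v)^-1 = v^-1 * u^-1.
Proof. by apply: inv_uniq; rewrite -fgA (fgA v) fgmV fg1m fgmV. Qed.
Lemma fgV1 : 1^-1 = 1.
Proof. by apply: inv_uniq; rewrite fg1m. Qed.

Definition gl (a : letter) : FG := fg_of [:: a].
Lemma gl_linv a : gl (linv a) = (gl a)^-1.
Proof.
apply/esym/inv_uniq; apply: val_inj => /=.
by rewrite /= eqxx.
Qed.

Variable K : FG -> Prop.
Hypothesis Ksub : is_subgroup K.
Hypothesis Knorm : forall y k, K k -> K (y^-1 * k * y).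

Lemma K1 : K 1. Proof. by case: Ksub. Qed.
Lemma KM u v : K u -> K v -> K (u * v). Proof. by case: Ksub => _ H _; apply: H. Qed.
Lemma KV u : K u -> K (u^-1). Proof. by case: Ksub => _ _ H; apply: H. Qed.
Lemma KVE u : K (u^-1) <-> K u.
Proof. by split=> [/KV|/KV //]; rewrite fgVK. Qed.
Lemma Kconj y k : K k -> K (y * k * y^-1).
Proof. by move=> /(Knorm (y^-1)); rewrite fgVK. Qed.

Definition same (p x : FG) := K (p^-1 * x).
Lemma same_refl p : same p p. Proof. by rewrite /same fgVm; exact: K1. Qed.
Lemma same_sym p x : same p x -> same x p.
Proof. by rewrite /same => /KV; rewrite fgVM fgVK. Qed.
Lemma same_trans p x y : same p x -> same x y -> same p y.
Proof. by rewrite /same => H1 H2; have := KM H1 H2; rewrite -fgA fgKVm. Qed.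
Lemma same_mulr p x a : same p x -> same (p * a) (x * a).
Proof.
rewrite /same => H; have := Knorm a H.
by rewrite fgVM -!fgA.
Qed.
Lemma same_mull y p x : same (y * p) x <-> same p (y^-1 * x).
Proof. by rewrite /same fgVM fgA. Qed.

Definition dl (x0 : FG) (i0 : 'I_n) (p : FG) (a : letter) : Z :=
  if a.2 then (if pb ((a.1 = i0) /\ same (p * gl a) x0) then (-1)%Z else 0%Z)
  else (if pb ((a.1 = i0) /\ same p x0) then 1%Z else 0%Z).

Fixpoint cnt x0 i0 (p : FG) (w : seq letter) : Z :=
  match w with
  | [::] => 0%Z
  | a :: w' => (dl x0 i0 p a + cnt x0 i0 (fgmul p (gl a)) w')%Z
  end.

Lemma gl_cons a w : fg_of (a :: w) = gl a * fg_of w.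
Proof. by rewrite -fg_cat. Qed.

Lemma cnt_cat x0 i0 p u v :
  cnt x0 i0 p (u ++ v) = (cnt x0 i0 p u + cnt x0 i0 (fgmul p (fg_of u)) v)%Z.
Proof.
elim: u p => [|a u IH] p /=.
  have -> : fg_of [::] = 1 by apply: val_inj.
  rewrite fgm1; lia.
by rewrite IH gl_cons fgA; lia.
Qed.

Lemma cnt_push x0 i0 p a w :
  cnt x0 i0 p (push a w) = cnt x0 i0 p (a :: w).
Proof.
case: w => [|b w] //=.
case: ifP => // /eqP ->.
rewrite /= gl_linv fgmK.
suff H : (dl x0 i0 p a + dl x0 i0 (fgmul p (gl a)) (linv a) = 0)%Z by lia.
case: a => i [] /=; rewrite /dl /= ?gl_linv ?fgmK.
  by case: pb; lia.
by case: pb; lia.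
Qed.

Lemma cnt_red x0 i0 p w : cnt x0 i0 p (freduce w) = cnt x0 i0 p w.
Proof.
elim: w p => //= a w IH p.
by rewrite cnt_push /= IH.
Qed.

Definition C x0 i0 p (u : FG) := cnt x0 i0 p (fgword u).

Lemma C_mul x0 i0 p u v : C x0 i0 p (u * v) = (C x0 i0 p u + C x0 i0 (fgmul p u) v)%Z.
Proof. by rewrite /C /= cnt_red cnt_cat fgE. Qed.

Lemma C_1 x0 i0 p : C x0 i0 p 1 = 0%Z.
Proof. by []. Qed.

Lemma C_inv x0 i0 p u : C x0 i0 p (u^-1) = (- C x0 i0 (fgmul p (fginv u)) u)%Z.
Proof.
have := C_mul x0 i0 p (u^-1) u; rewrite fgVm C_1; lia.
Qed.

Lemma dl_same x0 i0 p p' a : same p p' -> dl x0 i0 p a = dl x0 i0 p' a.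
Proof.
move=> H; rewrite /dl.
have Hs : forall q q', same q q' -> pb (a.1 = i0 /\ same q x0) = pb (a.1 = i0 /\ same q' x0).
  move=> q q' Hq; apply: pb_iff; split=> [[H1 H2]|[H1 H2]]; split=> //.
    exact: same_trans (same_sym Hq) H2.
  exact: same_trans Hq H2.
by rewrite (Hs p p') // (Hs (p * gl a) (p' * gl a)) //; apply: same_mulr.
Qed.

Lemma cnt_same x0 i0 p p' w : same p p' -> cnt x0 i0 p w = cnt x0 i0 p' w.
Proof.
elim: w p p' => //= a w IH p p' H.
by rewrite (dl_same _ _ a H) (IH _ (p' * gl a)) //; apply: same_mulr.
Qed.

Lemma C_same x0 i0 p p' u : same p p' -> C x0 i0 p u = C x0 i0 p' u.
Proof. exact: cnt_same. Qed.

Lemma cnt_shift x0 i0 y p w : cnt x0 i0 (y * p) w = cnt (y^-1 * x0) i0 p w.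
Proof.
elim: w p => //= a w IH p.
rewrite -fgA IH; congr (_ + _)%Z.
have Hs : forall q, pb (a.1 = i0 /\ same (y * q) x0) = pb (a.1 = i0 /\ same q (y^-1 * x0)).
  by move=> q; apply: pb_iff; split=> [[? /same_mull]|[? /same_mull]].
by rewrite /dl -fgA !Hs.
Qed.

Lemma cnt_x x0 x1 i0 p w : same x0 x1 -> cnt x0 i0 p w = cnt x1 i0 p w.
Proof.
move=> H; elim: w p => //= a w IH p; rewrite IH; congr (_ + _)%Z.
have Hs : forall q, pb (a.1 = i0 /\ same q x0) = pb (a.1 = i0 /\ same q x1).
  move=> q; apply: pb_iff; split=> [[H1 H2]|[H1 H2]]; split=> //.
    exact: same_trans H2 H.
  exact: same_trans H2 (same_sym H).
by rewrite /dl !Hs.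
Qed.

End Group.


Section Main.
Variable n : nat.
Notation FG := (FG n).
Notation letter := (letter n).
Local Notation "x * y" := (fgmul x y).
Local Notation "x ^-1" := (fginv x).
Local Notation e1 := (fg1 n).

Variable K : FG -> Prop.
Hypothesis Ksub : is_subgroup K.
Hypothesis Knorm : forall y k, K k -> K (y^-1 * k * y).

Notation same := (same K).
Notation C := (C K).

Lemma C_K x0 i0 k1 k2 : K k1 -> C x0 i0 e1 (k1 * k2) = (C x0 i0 e1 k1 + C x0 i0 e1 k2)%Z.
Proof.
move=> Hk; rewrite C_mul //; congr (_ + _)%Z; apply: C_same => //.
by rewrite /same fgm1 fg1m; apply: KV.
Qed.

Lemma C_KV x0 i0 k : K k -> C x0 i0 e1 (k^-1) = (- C x0 i0 e1 k)%Z.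
Proof.
move=> Hk; rewrite C_inv //; congr (- _)%Z; apply: C_same => //.
by rewrite /same fgm1 fg1m fgVK.
Qed.

Lemma comm_zero z : comm_sub K z -> K z /\ forall x0 i0, C x0 i0 e1 z = 0%Z.
Proof.
elim=> {z}.
- by split; [exact: K1 | ].
- move=> c [a [b [Ha Hb ->]]]; split.
    by rewrite /fgcomm; apply: KM => //; apply: KM => //; apply: KV.
  move=> x0 i0; rewrite /fgcomm C_K; last by apply: KM => //; apply: KV.
  rewrite !C_K ?C_KV //; [lia | exact: KV].
- move=> u v _ [Hu Cu] _ [Hv Cv]; split; first exact: KM.
  by move=> x0 i0; rewrite C_K // Cu Cv.
- move=> u _ [Hu Cu]; split; first exact: KV.
  by move=> x0 i0; rewrite C_KV // Cu.
Qed.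

Lemma C_conj x0 i0 y k : K k ->
  C x0 i0 e1 (y * k * y^-1) = C (y^-1 * x0) i0 e1 k.
Proof.
move=> Hk; rewrite C_mul // C_mul //.
have E1 : C x0 i0 (e1 * (y * k)) (y^-1) = C x0 i0 y (y^-1).
  apply: C_same => //; rewrite /same fg1m fgVM -fgA fgVm fgm1; exact: KV.
have E2 : C x0 i0 y (y^-1) = (- C x0 i0 e1 y)%Z.
  have := C_mul K x0 i0 e1 y (y^-1); rewrite fgmV C_1 fg1m; lia.
have E3 : C x0 i0 (e1 * y) k = C (y^-1 * x0) i0 e1 k.
  by rewrite fg1m -{1}(fgm1 y) /C cnt_shift.
rewrite E1 E2 E3; lia.
Qed.

End Main.


Section Fin.
Variable n : nat.
Notation FG := (FG n).
Notation letter := (letter n).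
Local Notation "x * y" := (fgmul x y).
Local Notation "x ^-1" := (fginv x).
Local Notation e1 := (fg1 n).

Variable K : FG -> Prop.
Hypothesis Ksub : is_subgroup K.
Hypothesis Knorm : forall y k, K k -> K (y^-1 * k * y).
Variable s : seq FG.
Hypothesis Hs : forall g, exists2 r, r \in s & K (r^-1 * g).

Notation same := (same K).
Notation C := (C K).

Definition N := size s.
Definition rep (j : nat) := nth e1 s j.
Definition cls (x : FG) := find (fun r => pb (same r x)) s.

Lemma has_cls x : has (fun r => pb (same r x)) s.
Proof. by case: (Hs x) => r Hr HK; apply/hasP; exists r => //; apply/pbP. Qed.

Lemma cls_lt x : cls x < N.
Proof. by rewrite /cls /N -has_find has_cls. Qed.

Lemma rep_cls x : same (rep (cls x)) x.
Proof. by apply/pbP; rewrite /rep /cls; apply: (nth_find e1 (has_cls x)). Qed.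

Lemma cls_eq x x' : same x x' -> cls x = cls x'.
Proof.
move=> H; apply: eq_find => r; apply: pb_iff; split=> H1.
  exact: same_trans H1 H.
exact: same_trans H1 (same_sym Ksub H).
Qed.

Lemma cls_same x x' : cls x = cls x' -> same x x'.
Proof.
move=> E; have H1 := rep_cls x; have H2 := rep_cls x'.
rewrite E in H1; exact: same_trans (same_sym Ksub H1) H2.
Qed.

Definition vtx x : 'I_N := Ordinal (cls_lt x).
Definition V : {set 'I_N} := [set j : 'I_N | cls (rep j) == j].

Lemma vtx_in x : vtx x \in V.
Proof. rewrite inE /=; apply/eqP/cls_eq; exact: rep_cls. Qed.

Lemma vtx_eq x x' : same x x' -> vtx x = vtx x'.
Proof. by move=> H; apply: val_inj; exact: cls_eq. Qed.

Lemma V_vtx j : j \in V -> vtx (rep j) = j.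
Proof. by rewrite inE => /eqP H; apply: val_inj. Qed.

Lemma V_same x j : j \in V -> same x (rep j) -> vtx x = j.
Proof. by move=> Hj H; rewrite -(V_vtx Hj); apply: vtx_eq. Qed.

Definition Cnt (w : FG) (e : 'I_N * 'I_n) : Z := C (rep e.1) e.2 e1 w.

Lemma cnt_gl x0 i0 p a : C x0 i0 p (gl a) = dl K x0 i0 p a.
Proof. by rewrite /C /= Z.add_0_r. Qed.

Lemma closure (S : {set 'I_N}) (P : 'I_N -> FG) :
  vtx e1 \in S -> (forall v, v \in S -> cls (P v) = v) ->
  (forall v a, v \in S -> vtx (P v * gl a) \in S) -> V \subset S.
Proof.
move=> H1 HP Hst.
have Hall : forall x, vtx x \in S.
  move=> x; rewrite -(fgE x); elim/last_ind: (fgword x) => [|w a IH].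
    by have -> : fg_of [::] = e1 by apply: val_inj.
  rewrite -cats1 fg_cat.
  have -> : vtx (fg_of w * fg_of [:: a]) = vtx (P (vtx (fg_of w)) * gl a).
    apply: vtx_eq; apply: same_mulr => //; apply: same_sym => //.
    by apply: cls_same; rewrite HP.
  exact: Hst.
by apply/subsetP => j Hj; rewrite -(V_vtx Hj).
Qed.

Lemma tree : exists T : {set 'I_N * 'I_n}, exists P : 'I_N -> FG,
  [/\ #|T| < #|V|, forall v, v \in V -> cls (P v) = v &
      forall v e, v \in V -> e.1 \in V -> e \notin T -> Cnt (P v) e = 0%Z].
Proof.
suff H : forall m (S : {set 'I_N}) (T : {set 'I_N * 'I_n}) (P : 'I_N -> FG),
  #|V :\: S| <= m -> S \subset V -> vtx e1 \in S -> #|T| < #|S| ->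
  (forall v, v \in S -> cls (P v) = v) ->
  (forall v e, v \in S -> e.1 \in V -> e \notin T -> Cnt (P v) e = 0%Z) ->
  exists T : {set 'I_N * 'I_n}, exists P : 'I_N -> FG,
  [/\ #|T| < #|V|, forall v, v \in V -> cls (P v) = v &
      forall v e, v \in V -> e.1 \in V -> e \notin T -> Cnt (P v) e = 0%Z].
  apply: (H #|V| [set vtx e1] set0 (fun _ => e1)).
  - exact: subset_leq_card (subsetDl _ _).
  - by rewrite sub1set vtx_in.
  - by rewrite set11.
  - by rewrite cards0 cards1.
  - by move=> v; rewrite inE => /eqP ->.
  - by move=> v e _ _ _; rewrite /Cnt C_1.
elim=> [|m IH] S T P Hm HSV H1 HT HP HC.
  have HVS : V \subset S.
    by move: Hm; rewrite leqn0 cards_eq0 setD_eq0.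
  have ES : S = V by apply/eqP; rewrite eqEsubset HSV HVS.
  by subst S; exists T, P.
case: (boolP (V \subset S)) => HVS.
  have ES : S = V by apply/eqP; rewrite eqEsubset HSV HVS.
  by subst S; exists T, P.
have [v [a [Hv Hu]]] : exists v a, v \in S /\ vtx (P v * gl a) \notin S.
  apply: NNPP => Hno; move/negP: HVS; apply; apply: (closure H1 HP).
  move=> v a Hv; apply: NNPP => Hn; apply: Hno; exists v, a; split => //.
  exact/negP.
set u := vtx (P v * gl a).
set t : 'I_N * 'I_n := if a.2 then (u, a.1) else (v, a.1).
apply: (IH (u |: S) (t |: T) (fun j => if j == u then P v * gl a else P j)).
- rewrite -ltnS; apply: leq_trans Hm; apply: proper_card.
  apply/properP; split.
    by apply/subsetP => j; rewrite !inE negb_or => /andP[/andP[_ ->] ->].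
  exists u; first by rewrite inE Hu vtx_in.
  by rewrite !inE eqxx.
- by rewrite subUset sub1set vtx_in HSV.
- by rewrite inE H1 orbT.
- rewrite cardsU1 (cardsU1 u) Hu /=.
  by case: (t \notin T); rewrite ?add0n ?add1n // ltnW.
- move=> j Hj /=; case: (eqVneq j u) => [->|Hne]; first by rewrite ?eqxx.
  by apply: HP; case/setU1P: Hj => // Hju; rewrite Hju eqxx in Hne.
- move=> j e Hj /=; case: (eqVneq j u) => [Eju|Hne]; last first.
    move=> He; rewrite in_setU1 negb_or => /andP[_]; apply: HC => //.
    by case/setU1P: Hj => // Hju; rewrite Hju eqxx in Hne.
  rewrite ?eqxx => He; rewrite in_setU1 negb_or => /andP[Het HeT].
  rewrite /Cnt C_mul // -/(Cnt _ e) HC // /= fg1m cnt_gl /dl.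
  rewrite /t /u in Het *; clear Hj Eju t u.
  case: a Hu Het => i [] Hu /= Het.
    case: pbP => // [[Hi Hsm]]; exfalso; move: Het He Hsm; rewrite Hi; clear Hi.
    case: e HeT => e1' e2' /= _ Het He Hsm; move/negP: Het; apply.
    rewrite xpair_eqE eqxx andbT; apply/eqP.
    by apply/esym/V_same.
  case: pbP => // [[Hi Hsm]]; exfalso; move: Het He Hsm; rewrite Hi; clear Hi.
  case: e HeT => e1' e2' /= _ Het He Hsm; move/negP: Het; apply.
  rewrite xpair_eqE eqxx andbT; apply/eqP.
  rewrite -(V_same He Hsm); apply: val_inj; rewrite /= (HP v Hv) //.
Qed.

Hypothesis hn : 2 <= n.
Variable psi : FG -> FG.
Hypothesis Hhom : forall u v, psi (u * v) = psi u * psi v.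
Hypothesis HpsiK : forall k, K k -> K (psi k).
Hypothesis Hab : induced_id_abelianization psi K.


Lemma psi1 : psi e1 = e1.
Proof.
have H := Hhom e1 e1; rewrite fg1m in H.
have : psi e1 * psi e1 * (psi e1)^-1 = psi e1 * (psi e1)^-1 by rewrite -H.
by rewrite fgmK fgmV.
Qed.

Lemma psiV u : psi (u^-1) = (psi u)^-1.
Proof. by apply/esym/inv_uniq; rewrite -Hhom fgmV psi1. Qed.

Lemma psi_C k x0 i0 : K k -> C x0 i0 e1 (psi k) = C x0 i0 e1 k.
Proof.
move=> Hk; have [_ H] := comm_zero Ksub Knorm (Hab Hk).
have := H x0 i0; rewrite C_K // ?C_KV //; [lia | exact: KV].
Qed.

Lemma inv_C g k z i0 : K k ->
  C (g^-1 * psi g * z) i0 e1 k = C z i0 e1 k.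
Proof.
move=> Hk; set q := psi g.
have Kk' : K (g * k * g^-1) by apply: Kconj.
have := psi_C (q * z) i0 Kk'.
rewrite C_conj // !Hhom psiV -/q C_conj // ?psi_C // ?HpsiK //.
rewrite fgKm fgA => -> //.
exact: (HpsiK Hk).
Qed.

Lemma final (g : FG) : ~ K (g^-1 * psi g) -> False.
Proof.
move=> Hh; set h := g^-1 * psi g.
have [T [P [HT HP HC]]] := tree.
pose E := setX (V) [set: 'I_n].
pose sig := fun e : 'I_(N) * 'I_n => (vtx (h * rep e.1), e.2).
have sig_inj : {in E &, injective sig}.
  move=> [a1 a2] [b1 b2]; rewrite !in_setX /= !in_setT !andbT => Ha Hb [Eab ->].
  congr (_, _); rewrite -(V_vtx Ha) -(V_vtx Hb); apply: vtx_eq.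
  have := cls_same Eab.
  by move/same_mull; rewrite fgKm.
have [e0 He0 Hs0] : exists2 e0, e0 \in E :\: T & sig e0 \notin T.
  apply: NNPP => Hno.
  have Hsub : sig @: (E :\: T) \subset T.
    apply/subsetP => x /imsetP [e He ->]; apply: NNPP => Hn; apply: Hno.
    by exists e => //; apply/negP.
  have := subset_leq_card Hsub.
  rewrite card_in_imset; last by move=> x y /setDP[Hx _] /setDP[Hy _]; apply: sig_inj.
  have HE : #|E| = muln #|V| n by rewrite cardsX cardsT card_ord.
  have HD : #|E :\: T| >= #|E| - #|T|.
    rewrite cardsD leq_sub2l //; apply: subset_leq_card; exact: subsetIr.
  have HV : muln #|V| 2 <= #|E| by rewrite HE leq_mul2l hn orbT.
  move=> Hc; have H2 := leq_trans HD Hc.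
  have H3 : #|E| <= #|T| + #|T| by rewrite -leq_subLR.
  have H4 := leq_trans HV H3.
  move: H4 HT; clear; lia.
case: e0 He0 Hs0 => z i; rewrite in_setD in_setX in_setT andbT => /andP[HeT Hz] Hs0.
pose a : letter := (i, false).
pose A := P z * gl a.
pose z' := vtx A.
pose B := P z'.
have HsAB : same A B.
  apply: cls_same; rewrite /B (HP z' (vtx_in _)) //.
have KL : K (A * B^-1).
  have := Kconj Knorm B (same_sym Ksub HsAB); by rewrite fgKVm.
have Hcnt : forall e, e.1 \in V -> e \notin T ->
    Cnt (A * B^-1) e = dl K (rep e.1) e.2 (P z) a.
  move=> e He1 HeT'.
  have E3 : C (rep e.1) e.2 (e1 * A) (B^-1) = (- Cnt B e)%Z.
    rewrite (C_same Ksub Knorm _ _ _ (_ : same (e1 * A) B)); last by rewrite fg1m.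
    have := C_mul K (rep e.1) e.2 e1 B (B^-1); rewrite fgmV C_1 fg1m /Cnt.
    move: (C _ _ e1 B) (C _ _ B _) => x y; lia.
  rewrite /Cnt C_mul // -/(Cnt (A * B^-1) e) E3 /A C_mul // fg1m cnt_gl.
  have -> : Cnt B e = 0%Z by apply: HC => //; exact: vtx_in.
  rewrite -/(Cnt (P z) e) HC //.
  move: (dl _ _ _ _ _) => d; lia.
have C0 := Hcnt (z, i) Hz HeT.
have C1 := Hcnt (sig (z, i)) (vtx_in _) Hs0.
move: C0 C1; rewrite /dl /=.
case: pbP => [_|[]]; last first.
  split => //; apply: cls_same; rewrite (HP z Hz); exact: (esym (f_equal val (V_vtx Hz))).
case: pbP => [[_ Hsm]|_] C0 C1.
  apply: Hh; rewrite -/h.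
  have Ez : vtx (h * rep z) = vtx (rep z).
    by rewrite -(V_same (vtx_in _) Hsm) (V_vtx Hz); apply: val_inj; rewrite /= (HP z Hz).
  have := cls_same (f_equal val Ez) => /(same_sym Ksub).
  rewrite /same => /(Kconj Knorm (rep z)).
  by rewrite fgKVm fgmK.
have : Cnt (A * B^-1) (sig (z, i)) = Cnt (A * B^-1) (z, i).
  rewrite /Cnt /=.
  have E1 : C (rep (vtx (h * rep z))) i e1 (A * B^-1) = C (h * rep z) i e1 (A * B^-1).
    by apply: cnt_x => //; exact: rep_cls.
  by rewrite E1 /h inv_C.
by rewrite C0 C1.
Qed.

End Fin.

Theorem proposition1p1 (n : nat) (hn : 2 <= n) (psi : FG n -> FG n)
  (K : FG n -> Prop) :
  is_aut psi -> is_subgroup K -> finite_index K -> characteristic K ->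
  ~ induced_id_quotient psi K ->
  ~ induced_id_abelianization psi K.
Proof.
move=> Hpsi Hsub [s Hs] Hchar Hnq Hab.
have Hhom := Hpsi.1.
have Knorm : forall y k, K k -> K (fgmul (fgmul (fginv y) k) y).
  move=> y k Hk.
  have Haut : is_aut (fun x => fgmul (fgmul (fginv y) x) y).
    split.
      by move=> u v; rewrite !fgA fgmK.
    exists (fun x => fgmul (fgmul y x) (fginv y)) => x.
      by rewrite !fgA fgmK fgmV fg1m.
    by rewrite !fgA fgmKV fgVm fg1m.
  by apply: (Hchar _ Haut _).2; exists k.
have HpsiK : forall k, K k -> K (psi k).
  by move=> k Hk; apply: (Hchar _ Hpsi _).2; exists k.
have [g Hg] : exists g, ~ K (fgmul (fginv g) (psi g)).
  by apply: not_all_ex_not.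
exact: (final Hsub Knorm Hs hn Hhom HpsiK Hab Hg).
Qed.
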